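(* Let $\Gamma$ be a metrized graph with $v$ vertices, and let $p\in V(\Gamma)$. Then $$2(v-2)Kf(\Gamma)=2\sum_{e_i \in E(\Gamma)} \frac{R_i}{L_i+R_i} Kf(\overline{\Gamma}_i) + 2v \sum_{e_i \in E(\Gamma)} \frac{L_i R_{a_i,p} R_{b_i,p}}{(L_i+R_i)^2}-v \sum_{e_i \in E(\Gamma)} \frac{L_i R_i^2}{(L_i+R_i)^2} + \sum_{w \in V(\Gamma)}\sum_{e_i \in E(\Gamma)} \frac{R_i}{L_i+R_i} \big(r(p_i,w)+r(q_i,w)\big),$$ where $p_i,q_i$ denote the end points of $e_i$.
   Context: A metrized graph $\Gamma$ is a finite connected graph (multiple edges and self-loops allowed) each of whose edges is identified with a closed segment of positive length, with a finite nonempty vertex set $V(\Gamma)$ containing every point of valence $\neq2$; $v=\#V(\Gamma)$, $E(\Gamma)$ its edge set, $L_i$ the length of $e_i$, $r$ the effective resistance (edges as resistors of resistance equal to length). $Kf(\Gamma)=\frac12\sum_{p,q\in V(\Gamma)}r(p,q)$. For an edge $e_i$ with end points $p_i,q_i$: if $\Gamma-e_i$ (interior deleted) is connected, $R_i$ is the effective resistance between $p_i,q_i$ in $\Gamma-e_i$, $R_{a_i,p}=\hat j_{p_i}(p,q_i)$, $R_{b_i,p}=\hat j_{q_i}(p,p_i)$ with $\hat j_z(x,y)$ the voltage function of $\Gamma-e_i$ (potential at $x$ when unit current enters at $y$ and exits at $z$, potential $0$ at $z$); if $e_i$ is a bridge, $R_{a_i,p}=0,R_{b_i,p}=R_i$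 for $p$ in the component of $\Gamma-e_i$ containing $p_i$ and $R_{a_i,p}=R_i,R_{b_i,p}=0$ otherwise, with every expression in $R_i$ interpreted as its limit as $R_i\to\infty$; for a self-loop $R_i=0$. $\overline\Gamma_i$ is obtained by contracting $e_i$ to a point, with vertex set the image of $V(\Gamma)$. *)

(* Defs.v *)
From HB Require Import structures.
From mathcomp Require Import all_boot all_order all_algebra.
From mathcomp Require Import all_classical all_reals all_analysis.
Set Implicit Arguments. Unset Strict Implicit. Unset Printing Implicit Defensive.
Import Order.TTheory GRing.Theory Num.Theory.
Import numFieldTopology.Exports numFieldNormedType.Exports.
Local Open Scope ring_scope.

(* A metrized graph is modelled by its combinatorial model: the vertex set
   V(Gamma) is the finite type V, the edges are indexed by 'I_m, edge j has
   end points (ends j).1, (ends j).2 (self-loops and multiple edges allowed)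
   and length len j.  Effective resistances between vertices of a metrized
   graph are those of the resistor network on V(Gamma) with edge j a resistor
   of resistance len j.

   Subgraphs obtained by deleting edges are handled by a predicate
   P : pred 'I_m selecting the edges kept. *)

Section MetrizedGraph.
Variables (R : realType) (V : finType) (m : nat).

Definition inc (ends : 'I_m -> V * V) (x : V) (j : 'I_m) : R :=
  ((ends j).1 == x)%:R - ((ends j).2 == x)%:R.

(* weighted Laplacian (conductance 1/len j on edge j) of the edges in P,
   indexed by V through enum_rank / enum_val *)
Definition lapmx (P : pred 'I_m) (ends : 'I_m -> V * V) (len : 'I_m -> R)
  : 'M[R]_#|V| :=
  \matrix_(a, b) \sum_(j < m | P j)
     (len j)^-1 * inc ends (enum_val a) j * inc ends (enum_val b) j.

Definition dvec (x : V) : 'rV[R]_#|V| := delta_mx 0 (enum_rank x).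

(* voltage function j_z(x,y): potential at x when a unit current enters at y
   and exits at z, the potential at z being 0.  The potential phi solves the
   Kirchhoff equations phi * L = e_y - e_z (pinvmx gives a solution whenever
   one exists, e.g. when y and z are in the same connected component). *)
Definition voltage (P : pred 'I_m) (ends : 'I_m -> V * V) (len : 'I_m -> R)
  (z x y : V) : R :=
  let phi := (dvec y - dvec z) *m pinvmx (lapmx P ends len) in
  phi 0 (enum_rank x) - phi 0 (enum_rank z).

Definition eff_res P ends len (x y : V) : R := voltage P ends len y x x.

Definition kirchhoff P ends len (S : {set V}) : R :=
  2^-1 * \sum_(x in S) \sum_(y in S) eff_res P ends len x y.

Definition adj (P : pred 'I_m) (ends : 'I_m -> V * V) : rel V :=
  fun x y => [exists j : 'I_m, P j && ((ends j == (x, y)) || (ends j == (y, x)))].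

Definition connected_graph (P : pred 'I_m) (ends : 'I_m -> V * V) : Prop :=
  forall x y : V, connect (adj P ends) x y.

Section Edge.
Variables (ends : 'I_m -> V * V) (len : 'I_m -> R) (i : 'I_m).

Definition pe : V := (ends i).1.
Definition qe : V := (ends i).2.

Definition del : pred 'I_m := fun j => j != i.

Definition Ri : R := eff_res del ends len pe qe.

Definition is_bridge : bool := ~~ connect (adj del ends) pe qe.

Definition Ra (p : V) : R := voltage del ends len pe p qe.
Definition Rb (p : V) : R := voltage del ends len qe p pe.

(* An expression F(R_i, R_{a_i,p}, R_{b_i,p}) attached to edge e_i; for a
   bridge it is interpreted as its limit as R_i -> +oo, with
   R_{a_i,p} = 0, R_{b_i,p} = R_i if p is in the component of Gamma - e_i
   containing p_i, and R_{a_i,p} = R_i, R_{b_i,p} = 0 otherwise. *)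
Definition edge_expr (p : V) (F : R -> R -> R -> R) : R :=
  if is_bridge then
    let inPc := connect (adj del ends) pe p in
    lim ((F r (if inPc then 0 else r) (if inPc then r else 0)) @[r --> +oo%R])%classic
  else F Ri (Ra p) (Rb p).

(* contraction of e_i: q_i is identified with p_i; the vertex set is the image
   of V(Gamma); e_i itself is removed (for a self-loop this is exactly
   contracting the loop to a point) *)
Definition cmap (x : V) : V := if x == qe then pe else x.
Definition cends : 'I_m -> V * V := fun j => (cmap (ends j).1, cmap (ends j).2).
Definition cverts : {set V} := cmap @: [set: V].

Definition Kf_contr : R := kirchhoff del cends len cverts.

End Edge.
End MetrizedGraph.

(* Main.v *)
Require Import Defs.
From HB Require Import structures.
From mathcomp Require Import all_boot all_order all_algebra.
From mathcomp Require Import all_classical all_reals all_analysis.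
From mathcomp Require Import ring lra.
Set Implicit Arguments. Unset Strict Implicit. Unset Printing Implicit Defensive.
Import Order.TTheory GRing.Theory Num.Theory.
Local Open Scope ring_scope.
Import numFieldTopology.Exports numFieldNormedType.Exports.

Local Open Scope classical_set_scope.
Section Lim.
Variable R : realType.

Lemma inv_cvg0 (L : R) : (fun r : R => (L + r)^-1) @ +oo --> (0:R).
Proof.
apply/(@gtr0_cvgV0 R R (+oo) _ (fun r => L + r)).
  near=> r; rewrite -ltrBlDl sub0r; near: r; apply: nbhs_pinfty_gt; exact: num_real.
exact: cvg_addrl.
Unshelve. all: end_near.
Qed.

Lemma frac_cvg1 (L : R) : (fun r : R => r / (L + r)) @ +oo --> (1:R).
Proof.
have H : (fun r : R => 1 - L * (L + r)^-1) @ +oo --> (1 - L * 0 : R).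
  apply: cvgB; first exact: cvg_cst.
  by apply: cvgMl_tmp; exact: inv_cvg0.
rewrite mulr0 subr0 in H.
apply: cvg_trans H; apply: near_eq_cvg.
near=> r.
have hr : L + r != 0.
  apply: lt0r_neq0; rewrite -ltrBlDl sub0r; near: r; apply: nbhs_pinfty_gt; exact: num_real.
rewrite /=; field; exact: hr.
Unshelve. all: end_near.
Qed.

Lemma lim_F1 (L : R) : lim ((r / (L + r)) @[r --> +oo]) = 1.
Proof. by apply: cvg_lim => //; exact: frac_cvg1. Qed.

Lemma lim_F3 (L : R) : lim ((L * r ^+ 2 / (L + r) ^+ 2) @[r --> +oo]) = L.
Proof.
apply: cvg_lim => //.
have H : (fun r : R => L * ((r / (L + r)) * (r / (L + r)))) @ +oo --> (L * (1 * 1) : R).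
  by apply: cvgMl_tmp; apply: cvgM; exact: frac_cvg1.
rewrite !mulr1 in H.
apply: cvg_trans H; apply: near_eq_cvg; near=> r.
by rewrite /= -!expr2 expr_div_n mulrA.
Unshelve. all: end_near.
Qed.

Lemma lim_0 (f : R -> R) : (forall r, f r = 0) -> lim (f r @[r --> +oo]) = 0.
Proof.
move=> H; rewrite (_ : f = fun _ => 0); first exact: lim_cst.
by apply: funext => r; rewrite H.
Qed.
End Lim.
Local Close Scope classical_set_scope.
Section Basic.
Variables (R : realType) (V : finType) (m : nat) (ends : 'I_m -> V * V) (len : 'I_m -> R).
Hypothesis hlen : forall j, 0 < len j.

Definition A (j : 'I_m) := (ends j).1.
Definition B (j : 'I_m) := (ends j).2.

Lemma sum_eq_pick (f : V -> R) (a : V) : \sum_x f x * (a == x)%:R = f a.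
Proof.
rewrite (bigD1 a) //= eqxx mulr1 big1 ?addr0 // => x /negbTE.
by rewrite eq_sym => ->; rewrite mulr0.
Qed.

Lemma grad (f : V -> R) j : \sum_x f x * inc R ends x j = f (A j) - f (B j).
Proof.
rewrite /inc; under eq_bigr do rewrite mulrBr.
by rewrite sumrB !sum_eq_pick.
Qed.

Definition lapf (P : pred 'I_m) (f : V -> R) (y : V) : R :=
  \sum_(j < m | P j) (len j)^-1 * (f (A j) - f (B j)) * inc R ends y j.

Definition fv (u : 'rV[R]_#|V|) (x : V) : R := u 0 (enum_rank x).
Definition rv (f : V -> R) : 'rV[R]_#|V| := \row_k f (enum_val k).

Lemma fv_rv f x : fv (rv f) x = f x.
Proof. by rewrite /fv mxE enum_rankK. Qed.

Lemma sum_ord_V (F : 'I_#|V| -> R) : \sum_k F k = \sum_x F (enum_rank x).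
Proof.
rewrite (reindex enum_rank) //; exists enum_val => x _; [exact: enum_rankK|exact: enum_valK].
Qed.

Lemma lapE P u k : (u *m lapmx P ends len) 0 k = lapf P (fv u) (enum_val k).
Proof.
rewrite mxE sum_ord_V.
under eq_bigr do rewrite mxE enum_rankK big_distrr /=.
rewrite exchange_big /lapf /=; apply: eq_bigr => j Pj.
rewrite -(grad (fv u)) mulr_sumr mulr_suml; apply: eq_bigr => x _; rewrite /fv; ring.
Qed.

Lemma lapf_ext P f h : f =1 h -> lapf P f =1 lapf P h.
Proof. by move=> fh y; apply: eq_bigr => j _; rewrite !fh. Qed.

Lemma lapfB P f h y : lapf P (fun x => f x - h x) y = lapf P f y - lapf P h y.
Proof. rewrite /lapf -sumrB; apply: eq_bigr => j _; ring. Qed.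

Lemma lapfD P f h y : lapf P (fun x => f x + h x) y = lapf P f y + lapf P h y.
Proof. rewrite /lapf -big_split; apply: eq_bigr => j _ /=; ring. Qed.

Lemma lapfZ P k f y : lapf P (fun x => k * f x) y = k * lapf P f y.
Proof. rewrite /lapf big_distrr; apply: eq_bigr => j _ /=; ring. Qed.

Lemma bilin P f h :
  \sum_y h y * lapf P f y =
  \sum_(j < m | P j) (len j)^-1 * (f (A j) - f (B j)) * (h (A j) - h (B j)).
Proof.
under eq_bigr do rewrite /lapf big_distrr /=.
rewrite exchange_big /=; apply: eq_bigr => j _.
rewrite -(grad h) mulr_sumr; apply: eq_bigr => x _ /=; ring.
Qed.

Lemma kernel P f : (forall y, lapf P f y = 0) ->
  forall j, P j -> f (A j) = f (B j).
Proof.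
move=> H.
have E : \sum_(j < m | P j) (len j)^-1 * (f (A j) - f (B j)) * (f (A j) - f (B j)) = 0.
  by rewrite -bilin big1 // => y _; rewrite H mulr0.
have /psumr_eq0P H2 : forall j, P j -> 0 <= (len j)^-1 * (f (A j) - f (B j)) * (f (A j) - f (B j)).
  by move=> j _; rewrite -mulrA; apply: mulr_ge0; [rewrite invr_ge0 ltW | rewrite -expr2 sqr_ge0].
have E2 := H2 E.
move=> j Pj; move: (E2 j Pj) => /eqP.
rewrite -mulrA mulf_eq0 invr_eq0 (gt_eqF (hlen j)) /= mulf_eq0 orbb subr_eq0.
by move/eqP.
Qed.

Lemma conn_const (P : pred 'I_m) (f : V -> R) : (forall j, P j -> f (A j) = f (B j)) ->
  forall x y, connect (adj P ends) x y -> f x = f y.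
Proof.
move=> H x y /connectP [s pth ->] {y}.
elim: s x pth => [|z s IH] x //= /andP [exy pth].
rewrite -(IH z pth).
move: exy => /existsP [j /andP [Pj /orP [] /eqP e]]; move: (H j Pj); rewrite /A /B e //=.
Qed.

Lemma ev_eq (k : 'I_#|V|) (y : V) : (enum_val k == y) = (k == enum_rank y).
Proof.
by apply/eqP/eqP => [<-|->]; rewrite ?enum_valK ?enum_rankK.
Qed.

Lemma dvecE (y : V) (k : 'I_#|V|) : (dvec R y) 0 k = (enum_val k == y)%:R.
Proof. by rewrite /dvec mxE eqxx ev_eq. Qed.

Lemma voltage_eq (P : pred 'I_m) (z x y : V) (f : V -> R) :
  (forall w, lapf P f w = (w == y)%:R - (w == z)%:R) ->
  connect (adj P ends) z x ->
  voltage P ends len z x y = f x - f z.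
Proof.
move=> Hf Hc.
set u := dvec R y - dvec R z.
have Hu : rv f *m lapmx P ends len = u.
  apply/rowP => k; rewrite lapE (lapf_ext _ (@fv_rv f)) Hf !mxE !ev_eq !eqxx //.
have Hs : (u <= lapmx P ends len)%MS by apply/submxP; exists (rv f); rewrite Hu.
have Hphi := mulmxKpV Hs.
set phi := u *m pinvmx _ in Hphi.
have K : forall w, lapf P (fun v => fv phi v - f v) w = 0.
  move=> w; rewrite lapfB Hf.
  have := lapE P phi (enum_rank w); rewrite enum_rankK Hphi => <-.
  by rewrite !mxE !eqxx /= !(inj_eq enum_rank_inj) subrr.
have := conn_const (kernel K) Hc.
rewrite /voltage /= -/u -/phi /fv => E; lra.
Qed.

End Basic.
Section Green.
Variables (R : realType) (V : finType) (m : nat) (ends : 'I_m -> V * V) (len : 'I_m -> R).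
Hypothesis hlen : forall j, 0 < len j.
Hypothesis hconn : connected_graph predT ends.
Variable p0 : V.

Local Notation Lm := (lapmx predT ends len).
Local Notation nR := (#|V|%:R : R).

Definition Jm : 'M[R]_#|V| := const_mx 1.

Lemma nR_neq0 : nR != 0.
Proof. by rewrite pnatr_eq0 -lt0n; apply/card_gt0P; exists p0. Qed.

Lemma lapT : Lm^T = Lm.
Proof. by apply/matrixP => k k'; rewrite !mxE; apply: eq_bigr => j _; ring. Qed.

Lemma JL : Jm *m Lm = 0.
Proof.
apply/matrixP => k k'; rewrite [LHS]mxE.
transitivity (((const_mx 1 : 'rV[R]_#|V|) *m Lm) 0 k').
  by rewrite mxE; apply: eq_bigr => k2 _; rewrite !mxE.
rewrite lapE mxE /lapf big1 // => j _; rewrite /fv !mxE subrr mulr0 mul0r //.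
Qed.

Lemma LJ : Lm *m Jm = 0.
Proof.
by rewrite -(trmxK (Lm *m Jm)) trmx_mul trmx_const lapT JL trmx0.
Qed.

Lemma JJ : Jm *m Jm = nR *: Jm.
Proof.
apply/matrixP => k k'; rewrite !mxE.
under eq_bigr do rewrite !mxE mulr1.
by rewrite sumr_const card_ord mulr1.
Qed.

Definition Mm := Lm + nR^-1 *: Jm.

Lemma MJ : Mm *m Jm = Jm.
Proof.
by rewrite mulmxDl LJ add0r -scalemxAl JJ scalerA mulVf ?nR_neq0 // scale1r.
Qed.

Lemma JM : Jm *m Mm = Jm.
Proof.
by rewrite mulmxDr JL add0r -scalemxAr JJ scalerA mulVf ?nR_neq0 // scale1r.
Qed.

Lemma Munit : Mm \in unitmx.
Proof.
rewrite -row_free_unit -kermx_eq0; apply/eqP/row_matrixP => i; rewrite row0.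
set u := row i _.
have Hu : u *m Mm = 0 by apply/sub_kermxP; exact: row_sub.
have uJ : u *m Jm = 0 by rewrite -MJ mulmxA Hu mul0mx.
have uL : u *m Lm = 0.
  by move: Hu; rewrite mulmxDr -scalemxAr uJ scaler0 addr0.
have K : forall y, lapf ends len predT (fv u) y = 0.
  by move=> y; rewrite -[y]enum_rankK -lapE uL mxE.
have C : forall x, fv u x = fv u p0.
  by move=> x; apply: (conn_const (kernel hlen K)); apply: hconn.
have S : \sum_x fv u x = 0.
  have := congr1 (fun M : 'rV[R]_#|V| => M 0 (enum_rank p0)) uJ; rewrite !mxE sum_ord_V => E; rewrite -[X in _ = X]E.
  by apply: eq_bigr => x _; rewrite /fv /Jm [const_mx 1 _ _]mxE mulr1.
move: S; under eq_bigr do rewrite C; rewrite sumr_const -mulr_natr => /eqP.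
rewrite mulf_eq0 (negbTE nR_neq0) orbF => /eqP S.
apply/rowP => k; rewrite [RHS]mxE; have := C (enum_val k).
by rewrite S /fv enum_valK.
Qed.

Definition Gm := invmx Mm - nR^-1 *: Jm.

Lemma invJ : invmx Mm *m Jm = Jm.
Proof. by rewrite -{1}MJ mulKmx // Munit. Qed.

Lemma GJ : Gm *m Jm = 0.
Proof. by rewrite mulmxBl invJ -scalemxAl JJ scalerA mulVf ?nR_neq0 // scale1r subrr. Qed.

Lemma GL : Gm *m Lm = 1%:M - nR^-1 *: Jm.
Proof.
have -> : Lm = Mm - nR^-1 *: Jm by rewrite /Mm addrK.
rewrite mulmxBr -scalemxAr GJ scaler0 subr0.
by rewrite mulmxBl mulVmx ?Munit // -scalemxAl JM.
Qed.

Lemma GT : Gm^T = Gm.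
Proof.
have MT : Mm^T = Mm by rewrite /Mm linearD /= linearZ /= lapT trmx_const.
by rewrite /Gm linearB /= linearZ /= trmx_inv MT trmx_const.
Qed.

Definition Gf (x y : V) : R := Gm (enum_rank x) (enum_rank y).

Lemma Gsym x y : Gf x y = Gf y x.
Proof. by rewrite /Gf -{1}GT mxE. Qed.

Lemma Gsum x : \sum_y Gf x y = 0.
Proof.
have := congr1 (fun M : 'M[R]_#|V| => M (enum_rank x) (enum_rank p0)) GJ; rewrite [X in X = _]mxE [X in _ = X]mxE sum_ord_V => E; rewrite -[X in _ = X]E.
by apply: eq_bigr => y _; rewrite /Gf /Jm [const_mx 1 _ _]mxE mulr1.
Qed.

Lemma GlapE x y : lapf ends len predT (Gf x) y = (x == y)%:R - nR^-1.
Proof.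
rewrite (@lapf_ext _ _ _ _ _ _ _ (fv (row (enum_rank x) Gm))); last first.
  by move=> z; rewrite /fv mxE.
have := lapE ends len predT (row (enum_rank x) Gm) (enum_rank y).
rewrite enum_rankK -row_mul GL !mxE (inj_eq enum_rank_inj) mulr1 => <- //.
Qed.

End Green.
Section Alg.
Variable R : realFieldType.
Lemma dne (L r : R) : L != 0 -> 1 - L^-1 * r != 0 -> L - r != 0.
Proof. move=> L0 d0; have -> : L - r = L * (1 - L^-1 * r) by field. by rewrite mulf_neq0. Qed.

Lemma alg1 (L r : R) : L != 0 -> 1 - L^-1 * r != 0 ->
  (r / (1 - L^-1 * r)) / (L + r / (1 - L^-1 * r)) = L^-1 * r.
Proof.
move=> L0 d0.
have Lr := dne L0 d0.
have E : L + r / (1 - L^-1 * r) = L / (1 - L^-1 * r) by field; rewrite L0 Lr.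
rewrite E; field; by rewrite L0 Lr.
Qed.
Lemma alg2 (L r x y : R) : L != 0 -> 1 - L^-1 * r != 0 ->
  L * (x / (1 - L^-1 * r)) * (y / (1 - L^-1 * r)) / (L + r / (1 - L^-1 * r)) ^+ 2
  = L^-1 * x * y.
Proof.
move=> L0 d0.
have Lr := dne L0 d0.
have E : L + r / (1 - L^-1 * r) = L / (1 - L^-1 * r) by field; rewrite L0 Lr.
rewrite E; field; by rewrite L0 Lr.
Qed.

Lemma alg3 (L r : R) : L != 0 -> 1 - L^-1 * r != 0 ->
  L * (r / (1 - L^-1 * r)) ^+ 2 / (L + r / (1 - L^-1 * r)) ^+ 2 = L^-1 * r ^+ 2.
Proof.
move=> L0 d0.
have Lr := dne L0 d0.
have E : L + r / (1 - L^-1 * r) = L / (1 - L^-1 * r) by field; rewrite L0 Lr.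
rewrite E; field; by rewrite L0 Lr.
Qed.
End Alg.

Section Adj.
Variables (V : finType) (m : nat).
Lemma adj_sym (P : pred 'I_m) (e : 'I_m -> V * V) x y : adj P e x y = adj P e y x.
Proof. by apply/existsP/existsP => [][j H]; exists j; rewrite orbC. Qed.

Lemma conn_symm (P : pred 'I_m) (e : 'I_m -> V * V) : connect_sym (adj P e).
Proof. apply: sym_connect_sym => x y; exact: adj_sym. Qed.

Lemma conn_map (e e' : rel V) (h : V -> V) :
  (forall x y, e x y -> connect e' (h x) (h y)) ->
  forall x y, connect e x y -> connect e' (h x) (h y).
Proof.
move=> H x y /connectP [s pth ->] {y}; elim: s x pth => [|z s IH] x /=.
  by move=> _; exact: connect0.
by move=> /andP [exz pth]; apply: connect_trans (H _ _ exz) (IH _ pth).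
Qed.
End Adj.

Section Edge3.
Variables (R : realType) (V : finType) (m : nat) (ends : 'I_m -> V * V) (len : 'I_m -> R).
Hypothesis hlen : forall j, 0 < len j.
Hypothesis hconn : connected_graph predT ends.
Variable p0 : V.
Variable i : 'I_m.

Local Notation G := (Gf ends len).
Local Notation a := (pe ends i).
Local Notation b := (qe ends i).
Local Notation c := ((len i)^-1).
Local Notation nR := (#|V|%:R : R).

Definition gv (w : V) : R := G a w - G b w.
Definition rho : R := gv a - gv b.

Lemma len_neq0 : len i != 0.
Proof. exact: lt0r_neq0 (hlen i). Qed.

Lemma lap_gv w : lapf ends len predT gv w = inc R ends w i.
Proof. by rewrite lapfB !(GlapE hlen hconn p0) /inc /pe /qe; ring. Qed.

Lemma lapf_del h w : lapf ends len (del i) h w =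
  lapf ends len predT h w - c * (h a - h b) * inc R ends w i.
Proof.
rewrite /lapf [in RHS](bigD1 i) //= addrAC subrr add0r.
by apply: eq_bigl => j.
Qed.

Lemma del_conn : ~~ is_bridge ends i -> forall x y, connect (adj (del i) ends) x y.
Proof.
move=> nb x y; apply: (@conn_map _ _ _ id) (hconn x y) => u v /existsP [j /andP [_ E]].
case: (eqVneq j i) => [ej | ne].
  move: nb; rewrite /is_bridge negbK /pe /qe; subst j.
  case/orP: E => /eqP -> //= H; by rewrite conn_symm.
by apply: connect1; apply/existsP; exists j; rewrite /del ne E.
Qed.

Lemma lapg_del w : lapf ends len (del i) gv w = (1 - c * rho) * inc R ends w i.
Proof. by rewrite lapf_del lap_gv /rho; ring. Qed.

Lemma nb_ne : ~~ is_bridge ends i -> 1 - c * rho != 0.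
Proof.
move=> nb; apply/eqP => E.
have K : forall w, lapf ends len (del i) gv w = 0 by move=> w; rewrite lapg_del E mul0r.
have gab := conn_const (kernel hlen K) (del_conn nb a b).
by move: E; rewrite /rho gab subrr mulr0 subr0 => /eqP; rewrite oner_eq0.
Qed.

Lemma del_sol (f u : V -> R) : (forall w, lapf ends len predT f w = u w) ->
  ~~ is_bridge ends i -> forall w,
  lapf ends len (del i) (fun x => f x + (c * (f a - f b) / (1 - c * rho)) * gv x) w = u w.
Proof.
move=> Hf nb w; rewrite lapfD lapfZ lapg_del lapf_del Hf.
have := nb_ne nb; move: (1 - c * rho) => d d0; field; by rewrite d0 len_neq0.
Qed.

Lemma inc_eq w : inc R ends w i = (w == a)%:R - (w == b)%:R.
Proof. by rewrite /inc /pe /qe !(eq_sym w). Qed.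

Lemma Ri_val : ~~ is_bridge ends i -> Ri ends len i = rho / (1 - c * rho).
Proof.
move=> nb; rewrite /Ri /eff_res.
rewrite (voltage_eq hlen (f := fun x => gv x + (c * (gv a - gv b) / (1 - c * rho)) * gv x)).
- have := nb_ne nb; rewrite /rho; move: (gv a) (gv b) => ga gb d0; field; by rewrite ?len_neq0 ?(dne len_neq0 d0).
- move=> w; rewrite (del_sol (u := fun w => inc R ends w i)) // ?inc_eq //.
  exact: lap_gv.
- exact: del_conn.
Qed.

Lemma Ra_val p : ~~ is_bridge ends i -> Ra ends len i p = (gv a - gv p) / (1 - c * rho).
Proof.
move=> nb; rewrite /Ra.
rewrite (voltage_eq hlen (f := fun x => -1 * gv x + (c * (-1 * gv a - -1 * gv b) / (1 - c * rho)) * gv x)).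
- have := nb_ne nb; rewrite /rho; move: (gv a) (gv b) (gv p) => ga gb gp d0; field; by rewrite ?len_neq0 ?(dne len_neq0 d0).
- move=> w; rewrite (del_sol (u := fun w => -1 * inc R ends w i)) // ?inc_eq; first ring.
  by move=> y; rewrite lapfZ lap_gv.
- exact: del_conn.
Qed.

Lemma Rb_val p : ~~ is_bridge ends i -> Rb ends len i p = (gv p - gv b) / (1 - c * rho).
Proof.
move=> nb; rewrite /Rb.
rewrite (voltage_eq hlen (f := fun x => gv x + (c * (gv a - gv b) / (1 - c * rho)) * gv x)).
- have := nb_ne nb; rewrite /rho; move: (gv a) (gv b) (gv p) => ga gb gp d0; field; by rewrite ?len_neq0 ?(dne len_neq0 d0).
- move=> w; rewrite (del_sol (u := fun w => inc R ends w i)) // ?inc_eq //.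
  exact: lap_gv.
- exact: del_conn.
Qed.

Lemma bridge_g : is_bridge ends i -> forall w,
  gv w = gv a - len i + len i * (connect (adj (del i) ends) a w)%:R.
Proof.
move=> br.
pose k := fun w => (connect (adj (del i) ends) a w)%:R : R.
have kdel : forall w, lapf ends len (del i) k w = 0.
  move=> w; rewrite /lapf big1 // => j ne.
  suff -> : k (A ends j) = k (B ends j) by rewrite subrr mulr0 mul0r.
  rewrite /k; suff -> : connect (adj (del i) ends) a (A ends j) =
    connect (adj (del i) ends) a (B ends j) by [].
  have e : adj (del i) ends (A ends j) (B ends j).
    by apply/existsP; exists j; rewrite ne /A /B -surjective_pairing eqxx.
  apply/idP/idP => H; first exact: connect_trans H (connect1 e).
  by apply: connect_trans H (connect1 _); rewrite adj_sym.
have ka : k a = 1 by rewrite /k connect0.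
have kb : k b = 0 by rewrite /k (negbTE br).
have K : forall w, lapf ends len predT (fun x => gv x - len i * k x) w = 0.
  move=> w; rewrite lapfB lapfZ lap_gv.
  have := lapf_del k w; rewrite kdel ka kb => E.
  have -> : lapf ends len predT k w = c * (1 - 0) * inc R ends w i.
    by apply/eqP; rewrite -subr_eq0 -E.
  by rewrite subr0 mulr1 mulrA mulfV ?len_neq0 // mul1r subrr.
move=> w; have := conn_const (kernel hlen K) (hconn a w) => /= E.
rewrite ka in E; rewrite -/(k w); move: E; move: (k w) (gv a) (gv w) => t ga gw E.
have -> : ga = gw - len i * t + len i * 1 by rewrite -E; ring.
ring.
Qed.

Lemma bridge_rho : is_bridge ends i -> rho = len i.
Proof.
move=> br; rewrite /rho [gv b](bridge_g br) (negbTE br) /= mulr0; ring.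
Qed.

Lemma E1 p : edge_expr ends len i p (fun Rv _ _ => Rv / (len i + Rv)) = c * rho.
Proof.
rewrite /edge_expr; case: ifP => br /=.
  by rewrite lim_F1 (bridge_rho br) mulVf // len_neq0.
by rewrite Ri_val ?br // alg1 // ?len_neq0 // nb_ne ?br.
Qed.

Lemma E2 p : edge_expr ends len i p
  (fun Rv Rav Rbv => len i * Rav * Rbv / (len i + Rv) ^+ 2) =
  c * (gv a - gv p) * (gv p - gv b).
Proof.
rewrite /edge_expr; case: ifP => br /=.
  rewrite lim_0; last by move=> r; case: ifP => _; rewrite ?mulr0 ?mul0r.
  rewrite [gv p](bridge_g br) [gv b](bridge_g br) (negbTE br).
  by case: (connect _ a p); rewrite /=; ring.
by rewrite Ri_val ?br // Ra_val ?br // Rb_val ?br // alg2 // ?len_neq0 // nb_ne ?br.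
Qed.

Lemma E3 p : edge_expr ends len i p
  (fun Rv _ _ => len i * Rv ^+ 2 / (len i + Rv) ^+ 2) = c * rho ^+ 2.
Proof.
rewrite /edge_expr; case: ifP => br /=.
  rewrite lim_F3 (bridge_rho br); field; exact: len_neq0.
by rewrite Ri_val ?br // alg3 // ?len_neq0 // nb_ne ?br.
Qed.

End Edge3.
Section Sums.
Variables (R : realFieldType) (V : finType).
Local Notation nR := (#|V|%:R : R).

Lemma sum_const_V (k : R) : \sum_(x : V) k = nR * k.
Proof. by rewrite sumr_const -[#|xpredT|]/#|V| mulr_natl. Qed.

Lemma sumsq1 (f : V -> R) z : \sum_x f x = 0 ->
  \sum_x (f x - f z) ^+ 2 = \sum_x f x ^+ 2 + nR * f z ^+ 2.
Proof.
move=> s.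
transitivity (\sum_x f x ^+ 2 - 2 * f z * \sum_x f x + \sum_(x : V) f z ^+ 2).
  rewrite mulr_sumr -sumrB -big_split; apply: eq_bigr => x _ /=; ring.
by rewrite s mulr0 subr0 sum_const_V.
Qed.

Lemma sumsq2 (f : V -> R) : \sum_x f x = 0 ->
  \sum_x \sum_y (f x - f y) ^+ 2 = 2 * nR * \sum_x f x ^+ 2.
Proof.
move=> s.
transitivity (\sum_x (nR * f x ^+ 2 + \sum_y f y ^+ 2)).
  apply: eq_bigr => x _.
  transitivity (\sum_(y : V) f x ^+ 2 - 2 * f x * \sum_y f y + \sum_y f y ^+ 2).
    rewrite mulr_sumr -sumrB -big_split; apply: eq_bigr => y _ /=; ring.
  by rewrite s mulr0 subr0 sum_const_V.
by rewrite big_split /= -mulr_sumr sum_const_V; ring.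
Qed.

Lemma sum_minus (h : V -> V -> R) b : (forall x y, h x y = h y x) -> h b b = 0 ->
  \sum_(x | x != b) \sum_(y | y != b) h x y =
  \sum_x \sum_y h x y - 2 * \sum_x h x b.
Proof.
move=> hs hbb.
rewrite (eq_bigr (fun x => \sum_y h x y - h x b)); last first.
  by move=> x _; rewrite [in RHS](bigD1 b) //= addrAC subrr add0r.
rewrite sumrB [in RHS](bigD1 b) //= [X in _ - 2 * X](bigD1 b) //= hbb add0r.
have -> : \sum_y h b y = \sum_(x | x != b) h x b.
  by rewrite (bigD1 b) //= hbb add0r; apply: eq_bigr => y _; rewrite hs.
ring.
Qed.
End Sums.

Section Edge4.
Variables (R : realType) (V : finType) (m : nat) (ends : 'I_m -> V * V) (len : 'I_m -> R).
Hypothesis hlen : forall j, 0 < len j.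
Hypothesis hconn : connected_graph predT ends.
Variable p0 : V.

Local Notation G := (Gf ends len).
Local Notation nR := (#|V|%:R : R).

Lemma eff_resG x y : eff_res predT ends len x y = G x x + G y y - 2 * G x y.
Proof.
rewrite /eff_res (voltage_eq hlen (f := fun w => G x w - G y w)).
- rewrite (Gsym ends len y x); ring.
- by move=> w; rewrite lapfB !(GlapE hlen hconn p0) !(eq_sym w); ring.
- exact: hconn.
Qed.

Lemma energy0 (P : pred 'I_m) (f : V -> R) :
  \sum_(j < m | P j) (len j)^-1 * (f (A ends j) - f (B ends j)) * (f (A ends j) - f (B ends j)) = 0 ->
  forall j, P j -> f (A ends j) = f (B ends j).
Proof.
move=> E.
have /psumr_eq0P H2 : forall j, P j -> 0 <= (len j)^-1 * (f (A ends j) - f (B ends j)) * (f (A ends j) - f (B ends j)).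
  by move=> j _; rewrite -mulrA; apply: mulr_ge0; [rewrite invr_ge0 ltW | rewrite -expr2 sqr_ge0].
have E2 := H2 E.
move=> j Pj; move: (E2 j Pj) => /eqP.
rewrite -mulrA mulf_eq0 invr_eq0 (gt_eqF (hlen j)) /= mulf_eq0 orbb subr_eq0.
by move/eqP.
Qed.

Variable i : 'I_m.
Local Notation a := (pe ends i).
Local Notation b := (qe ends i).
Local Notation c := ((len i)^-1).
Local Notation g := (gv ends len i).
Local Notation rh := (rho ends len i).

Lemma rho_ne0 : a != b -> rh != 0.
Proof.
move=> ab; apply/eqP => r0.
have E : \sum_(j < m | predT j) (len j)^-1 * (g (A ends j) - g (B ends j)) * (g (A ends j) - g (B ends j)) = 0.
  rewrite -bilin; under eq_bigr do rewrite (lap_gv hlen hconn p0).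
  by rewrite grad -r0.
have K : forall w, lapf ends len predT g w = 0.
  move=> w; rewrite /lapf big1 // => j _; rewrite (energy0 E) // subrr mulr0 mul0r //.
move: (K a); rewrite (lap_gv hlen hconn p0) /inc /pe /qe eqxx eq_sym (negbTE ab) subr0 => /eqP.
by rewrite oner_eq0.
Qed.

Lemma gv_sum : \sum_x g x = 0.
Proof. by rewrite /gv sumrB !(Gsum hlen hconn p0) subrr. Qed.

Lemma gv_aa : a = b -> forall w, g w = 0.
Proof. by move=> ab w; rewrite /gv ab subrr. Qed.

Lemma cmap_a : a != b -> cmap ends i a = a.
Proof. by move=> ab; rewrite /cmap (negbTE ab). Qed.

Lemma cmap_b : cmap ends i b = a.
Proof. by rewrite /cmap eqxx. Qed.

Lemma cmap_eq (ab : a != b) z w : (cmap ends i z == w) =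
  if w == b then false else if w == a then (z == a) || (z == b) else (z == w).
Proof.
rewrite /cmap; case: (eqVneq z b) => [-> | zb].
  case: (eqVneq w b) => [-> | wb]; first by rewrite (negbTE ab).
  by case: (eqVneq w a) => [e | wa]; rewrite ?orbT.
case: (eqVneq w b) => [-> | wb]; first by rewrite (negbTE zb).
by case: (eqVneq w a) => [e | wa]; rewrite ?orbF // e.
Qed.

Lemma cverts_mem (ab : a != b) x : (x \in cverts ends i) = (x != b).
Proof.
rewrite /cverts; apply/imsetP/idP => [[z _ ->] | xb].
  by rewrite /cmap; case: ifP => [_ | /negbT].
by exists x; rewrite ?inE // /cmap (negbTE xb).
Qed.

Local Notation ce := (cends ends i).

Lemma orE (ab : a != b) z : (((z == a) || (z == b))%:R : R) = (z == a)%:R + (z == b)%:R.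
Proof. by case: (eqVneq z a) => [->|_]; rewrite ?(negbTE ab) /= ?add0r ?addr0. Qed.

Lemma lapf_contr (ab : a != b) (t : V -> R) w : t a = t b ->
  lapf ce len (del i) t w =
  if w == b then 0 else if w == a then
    lapf ends len (del i) t a + lapf ends len (del i) t b
  else lapf ends len (del i) t w.
Proof.
move=> tab.
have tc : forall z, t (cmap ends i z) = t z.
  by move=> z; rewrite /cmap; case: eqVneq => // ->.
have incE : forall j, inc R ce w j = if w == b then 0 else if w == a then
    inc R ends a j + inc R ends b j else inc R ends w j.
  move=> j; rewrite /inc /cends /= !(cmap_eq ab).
  case: ifP => _; first by rewrite subrr.
  case: ifP => _ //; rewrite !orE //; ring.
rewrite /lapf; under eq_bigr do rewrite incE /A /B /cends /= !tc.
case: ifP => _; first by rewrite big1 // => j _; rewrite mulr0.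
case: ifP => _ //; rewrite -big_split /=; apply: eq_bigr => j _; rewrite /A /B; ring.
Qed.

Definition dl x y := (G x a - G y a) - (G x b - G y b).
Definition thet x y w := (G x w - G y w) - (dl x y / rh) * g w.

Lemma thet_ab (ab : a != b) x y : thet x y a = thet x y b.
Proof.
have r0 := rho_ne0 ab; rewrite /thet /rho in r0 *.
move: (g a) (g b) r0 => ga gb r0; rewrite /dl; field; exact: r0.
Qed.

Lemma lap_thet x y w : lapf ends len predT (thet x y) w =
  (x == w)%:R - (y == w)%:R - (dl x y / rh) * inc R ends w i.
Proof.
rewrite lapfB lapfB lapfZ !(GlapE hlen hconn p0) (lap_gv hlen hconn p0); ring.
Qed.

Lemma contr_sol (ab : a != b) x y : x != b -> y != b -> forall w,
  lapf ce len (del i) (thet x y) w = (w == x)%:R - (w == y)%:R.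
Proof.
move=> xb yb w.
rewrite lapf_contr // ?thet_ab // !(lapf_del ends len i) !lap_thet (thet_ab ab) subrr mulr0 mul0r !subr0.
rewrite /inc /pe /qe -/a -/b.
case: (eqVneq w b) => [-> | wb].
  by rewrite !(eq_sym b) (negbTE xb) (negbTE yb) subrr.
case: (eqVneq w a) => [-> | wa].
  rewrite !eqxx (negbTE ab) (eq_sym b a) (negbTE ab) (negbTE xb) (negbTE yb) !(eq_sym a).
  ring.
rewrite /= !(eq_sym x) !(eq_sym y); ring.
Qed.

Lemma contr_conn (ab : a != b) x y : x != b -> y != b -> connect (adj (del i) ce) y x.
Proof.
move=> xb yb.
have cx : forall z, z != b -> cmap ends i z = z by move=> z zb; rewrite /cmap (negbTE zb).
rewrite -{1}(cx x xb) -(cx y yb).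
apply: (@conn_map _ (adj predT ends)) (hconn y x) => u v /existsP [j /andP [_ E]].
case: (eqVneq j i) => [ej | ne].
  subst j; case/orP: E => /eqP E.
    have -> : u = a by rewrite /pe E.
    have -> : v = b by rewrite /qe E.
    by rewrite cmap_b cmap_a // connect0.
  have -> : u = b by rewrite /qe E.
  have -> : v = a by rewrite /pe E.
  by rewrite cmap_b cmap_a // connect0.
apply: connect1; apply/existsP; exists j; rewrite /del ne /cends /=.
by case/orP: E => /eqP ->; rewrite eqxx ?orbT.
Qed.

Local Notation r x y := (G x x + G y y - 2 * G x y).
Local Notation tr := (\sum_x G x x).

Lemma effc (ab : a != b) x y : x != b -> y != b ->
  eff_res (del i) ce len x y = r x y - (g x - g y) ^+ 2 / rh.
Proof.
move=> xb yb; rewrite /eff_res (voltage_eq hlen (f := thet x y)).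
- rewrite /thet /dl /gv (Gsym ends len y x) (Gsym ends len x a) (Gsym ends len y a)
    (Gsym ends len x b) (Gsym ends len y b); ring.
- by move=> w; exact: contr_sol.
- exact: contr_conn.
Qed.

Lemma sumr_rb z : \sum_x r x z = tr + nR * G z z.
Proof.
rewrite sumrB big_split /= sum_const_V -mulr_sumr.
rewrite [X in 2 * X](eq_bigr (fun x => G z x)); last by move=> x _; rewrite (Gsym ends len x z).
rewrite (Gsum hlen hconn p0); ring.
Qed.

Lemma sumr_r : \sum_x \sum_y r x y = 2 * nR * tr.
Proof.
rewrite (eq_bigr (fun x => nR * G x x + tr)); last first.
  move=> x _; rewrite sumrB big_split /= sum_const_V -mulr_sumr (Gsum hlen hconn p0); ring.
rewrite big_split /= -mulr_sumr sum_const_V; ring.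
Qed.

Lemma Kf_val (ab : a != b) : Kf_contr ends len i =
  2^-1 * (\sum_x \sum_y (r x y - (g x - g y) ^+ 2 / rh) -
          2 * \sum_x (r x b - (g x - g b) ^+ 2 / rh)).
Proof.
rewrite /Kf_contr /kirchhoff; congr (_ * _).
transitivity (\sum_(x | x != b) \sum_(y | y != b) (r x y - (g x - g y) ^+ 2 / rh)).
  under eq_bigl do rewrite (cverts_mem ab).
  apply: eq_bigr => x xb; under eq_bigl do rewrite (cverts_mem ab).
  by apply: eq_bigr => y yb; rewrite effc.
rewrite sum_minus //.
  by move=> x y; rewrite (Gsym ends len x y); ring.
ring.
Qed.

Lemma T1_val : c * rh * Kf_contr ends len i =
  c * (rh * (nR * tr - tr - nR * G b b) - ((nR - 1) * \sum_x g x ^+ 2 - nR * g b ^+ 2)).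
Proof.
case: (eqVneq a b) => [ab | ab].
  have g0 := gv_aa ab.
  have -> : rh = 0 by rewrite /rho !g0 subr0.
  have -> : \sum_x g x ^+ 2 = 0 by rewrite big1 // => x _; rewrite g0 expr2 mulr0.
  rewrite g0; ring.
rewrite Kf_val //.
under eq_bigr do rewrite sumrB -mulr_suml.
rewrite sumrB -mulr_suml sumsq2 ?gv_sum // sumr_r.
rewrite sumrB -mulr_suml sumsq1 ?gv_sum // sumr_rb.
have r0 := rho_ne0 ab; move: (rh) r0 => rr r0; field; by rewrite r0 (len_neq0 hlen).
Qed.

End Edge4.
Section Final.
Variables (R : realType) (V : finType) (m : nat) (ends : 'I_m -> V * V) (len : 'I_m -> R).
Hypothesis hlen : forall j, 0 < len j.
Hypothesis hconn : connected_graph predT ends.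
Variable p0 : V.

Local Notation G := (Gf ends len).
Local Notation nR := (#|V|%:R : R).
Local Notation tr := (\sum_x G x x).

Lemma GLem y (h : V -> R) :
  \sum_(j < m) (len j)^-1 * (G y (A ends j) - G y (B ends j)) * (h (A ends j) - h (B ends j))
  = h y - nR^-1 * \sum_x h x.
Proof.
rewrite -(bilin ends len predT (G y) h).
under eq_bigr do rewrite (GlapE hlen hconn p0) mulrBr.
by rewrite sumrB sum_eq_pick -mulr_suml mulrC.
Qed.

Lemma Gfos : \sum_(j < m) (len j)^-1 * rho ends len j = nR - 1.
Proof.
transitivity (\sum_x lapf ends len predT (G x) x).
  rewrite /lapf exchange_big /=; apply: eq_bigr => j _.
  rewrite (eq_bigr (fun x : V => (len j)^-1 * ((G x (A ends j) - G x (B ends j)) * inc R ends x j))); last first.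
    by move=> x _; ring.
  rewrite -mulr_sumr (grad ends (fun x => G x (A ends j) - G x (B ends j))).
  rewrite /rho /gv /pe /qe /A /B (Gsym ends len (ends j).2 (ends j).1); ring.
under eq_bigr do rewrite (GlapE hlen hconn p0) eqxx /=.
rewrite sum_const_V; field; exact: (nR_neq0 R p0).
Qed.

Lemma Gsq : \sum_(j < m) (len j)^-1 * \sum_x gv ends len j x ^+ 2 = tr.
Proof.
transitivity (\sum_x \sum_(j < m) (len j)^-1 * (G x (A ends j) - G x (B ends j)) * (G x (A ends j) - G x (B ends j))).
  rewrite exchange_big /=; apply: eq_bigr => j _; rewrite mulr_sumr; apply: eq_bigr => x _.
  rewrite /gv /pe /qe /A /B (Gsym ends len (ends j).1 x) (Gsym ends len (ends j).2 x); ring.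
apply: eq_bigr => x _; rewrite GLem (Gsum hlen hconn p0) mulr0 subr0 //.
Qed.

Lemma Gcross p : \sum_(j < m) (len j)^-1 * gv ends len j p *
   (gv ends len j (pe ends j) + gv ends len j (qe ends j) - gv ends len j p) = - (nR^-1 * tr).
Proof.
transitivity (\sum_(j < m) (len j)^-1 * (G p (A ends j) - G p (B ends j)) *
   ((fun x => G x x - G p x) (A ends j) - (fun x => G x x - G p x) (B ends j))).
  apply: eq_bigr => j _.
  rewrite /gv /pe /qe /A /B /= (Gsym ends len (ends j).1 p) (Gsym ends len (ends j).2 p)
    (Gsym ends len (ends j).2 (ends j).1); ring.
rewrite (GLem p (fun x => G x x - G p x)) /= sumrB (Gsum hlen hconn p0); ring.
Qed.

Lemma sum_r_left z : \sum_w eff_res predT ends len z w = tr + nR * G z z.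
Proof.
under eq_bigr do rewrite (eff_resG hlen hconn p0).
rewrite sumrB big_split /= sum_const_V -mulr_sumr (Gsum hlen hconn p0); ring.
Qed.

Lemma per_edge p i :
  2 * (edge_expr ends len i p (fun Rv _ _ => Rv / (len i + Rv)) * Kf_contr ends len i)
  + 2 * nR * edge_expr ends len i p (fun Rv Rav Rbv => len i * Rav * Rbv / (len i + Rv) ^+ 2)
  - nR * edge_expr ends len i p (fun Rv _ _ => len i * Rv ^+ 2 / (len i + Rv) ^+ 2)
  + \sum_w edge_expr ends len i p (fun Rv _ _ => Rv / (len i + Rv))
          * (eff_res predT ends len (pe ends i) w + eff_res predT ends len (qe ends i) w)
  = 2 * nR * tr * ((len i)^-1 * rho ends len i)
    - 2 * (nR - 1) * ((len i)^-1 * \sum_x gv ends len i x ^+ 2)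
    + 2 * nR * ((len i)^-1 * gv ends len i p *
        (gv ends len i (pe ends i) + gv ends len i (qe ends i) - gv ends len i p)).
Proof.
rewrite !(E1 hlen hconn p0) (E2 hlen hconn p0) (E3 hlen hconn p0) (T1_val hlen hconn p0).
rewrite -mulr_sumr big_split /= !sum_r_left.
rewrite /rho /gv (Gsym ends len (qe ends i) (pe ends i)).
ring.
Qed.

Lemma main p :
  2 * (nR - 2) * kirchhoff predT ends len [set: V] =
    2 * (\sum_(i < m)
          edge_expr ends len i p (fun Rv _ _ => Rv / (len i + Rv))
          * Kf_contr ends len i)
  + 2 * nR * (\sum_(i < m)
          edge_expr ends len i p
            (fun Rv Rav Rbv => len i * Rav * Rbv / (len i + Rv) ^+ 2))
  - nR * (\sum_(i < m)
          edge_expr ends len i p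
            (fun Rv _ _ => len i * Rv ^+ 2 / (len i + Rv) ^+ 2))
  + \sum_(w : V) \sum_(i < m)
          edge_expr ends len i p (fun Rv _ _ => Rv / (len i + Rv))
          * (eff_res predT ends len (pe ends i) w
             + eff_res predT ends len (qe ends i) w).
Proof.
have L : kirchhoff predT ends len [set: V] = nR * tr.
  transitivity (2^-1 * \sum_x \sum_y eff_res predT ends len x y).
    rewrite /kirchhoff; congr (_ * _).
    rewrite (eq_bigl xpredT) => [|x]; last by rewrite inE.
    apply: eq_bigr => x _; rewrite (eq_bigl xpredT) // => y; by rewrite inE.
  under eq_bigr do under eq_bigr do rewrite (eff_resG hlen hconn p0).
  by rewrite (sumr_r hlen hconn p0); field.
rewrite [X in _ = _ + X]exchange_big /=.
rewrite !mulr_sumr -big_split /= -sumrB -big_split /=.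
rewrite (eq_bigr _ (fun i _ => per_edge p i)).
rewrite L.
rewrite big_split sumrB /= -!mulr_sumr Gfos Gsq Gcross.
field; exact: (nR_neq0 R p0).
Qed.

End Final.

Unset Implicit Arguments.

Theorem lemma3p2 (R : realType) (V : finType) (m : nat)
  (ends : 'I_m -> V * V) (len : 'I_m -> R) (p : V) :
  (forall j, 0 < len j) ->
  connected_graph predT ends ->
  2 * (#|V|%:R - 2) * kirchhoff predT ends len [set: V] =
    2 * (\sum_(i < m)
          edge_expr ends len i p (fun Rv _ _ => Rv / (len i + Rv))
          * Kf_contr ends len i)
  + 2 * #|V|%:R * (\sum_(i < m)
          edge_expr ends len i p
            (fun Rv Rav Rbv => len i * Rav * Rbv / (len i + Rv) ^+ 2))
  - #|V|%:R * (\sum_(i < m)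
          edge_expr ends len i p
            (fun Rv _ _ => len i * Rv ^+ 2 / (len i + Rv) ^+ 2))
  + \sum_(w : V) \sum_(i < m)
          edge_expr ends len i p (fun Rv _ _ => Rv / (len i + Rv))
          * (eff_res predT ends len (pe ends i) w
             + eff_res predT ends len (qe ends i) w).
Proof. by move=> hlen hconn; exact: (main hlen hconn p p). Qed.
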